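(* Let $w\in\mathbb{C}\setminus\mathbb{Z}$. Then for all $u,v,r\in\mathbb{C}$ and all $a,b,c,d,e,f\in\mathbb{Z}$, $$\sum_{g\in\mathbb{Z}}W\left(\begin{smallmatrix} f& g\\ e& d\end{smallmatrix}\middle|v-r\right)W\left(\begin{smallmatrix} a& b\\ f& g\end{smallmatrix}\middle|u-r\right)W\left(\begin{smallmatrix} b& c\\ g& d\end{smallmatrix}\middle|u-v\right)=\sum_{g\in\mathbb{Z}}W\left(\begin{smallmatrix} a& g\\ f& e\end{smallmatrix}\middle|u-v\right)W\left(\begin{smallmatrix} g& c\\ e& d\end{smallmatrix}\middle|u-r\right)W\left(\begin{smallmatrix} a& b\\ g& c\end{smallmatrix}\middle|v-r\right),$$ where $W=W^{(1,1)}$.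
   Context: The weights $W^{(1,1)}\left(\begin{smallmatrix} a& b\\ d& c\end{smallmatrix}\middle|u\right)$ ($a,b,c,d\in\mathbb{Z}$, $u\in\mathbb{C}$) are zero unless $|a-b|=|b-c|=|c-d|=|d-a|=1$, and for $l\in\mathbb{Z}$ (both sign choices): $W^{(1,1)}\left(\begin{smallmatrix} l\pm2& l\pm1\\ l\pm1& l\end{smallmatrix}\middle|u\right)=u+1$, $W^{(1,1)}\left(\begin{smallmatrix} l& l\pm1\\ l\pm1& l\end{smallmatrix}\middle|u\right)=\frac{\mp u+l+w}{l+w}$, $W^{(1,1)}\left(\begin{smallmatrix} l& l\pm1\\ l\mp1& l\end{smallmatrix}\middle|u\right)=\frac{u(l\pm1+w)}{l+w}$. *)

(* Defs.v *)
From HB Require Import structures.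
From mathcomp Require Import all_boot all_order all_algebra.
From mathcomp Require Import complex.
From mathcomp Require Import boolp classical_sets fsbigop reals.
Set Implicit Arguments. Unset Strict Implicit. Unset Printing Implicit Defensive.
Import Order.TTheory GRing.Theory Num.Theory.
Local Open Scope ring_scope.

(* Arguments in reading order: top-left a, top-right b, bottom-left d,
   bottom-right c.  Zero unless |a-b|=|b-c|=|c-d|=|d-a|=1.
   Given adjacency:
   - a <> c  (then a = l±2, b = d = l±1, c = l)             : u + 1
   - a = c = l, b = d = l±1                                   : (∓u + l + w)/(l + w)
   - a = c = l, b = l±1, d = l∓1                              : u (l±1 + w)/(l + w) = u (b + w)/(l + w) *)
Definition W11 (R : realType) (w : R[i]) (a b d c : int) (u : R[i]) : R[i] :=
  if [&& `|a - b| == 1, `|b - c| == 1, `|c - d| == 1 & `|d - a| == 1] then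
    if a != c then u + 1
    else if b == d then
      (if b == a + 1 then (- u + a%:~R + w) / (a%:~R + w)
       else (u + a%:~R + w) / (a%:~R + w))
    else u * (b%:~R + w) / (a%:~R + w)
  else 0.

(* Main.v *)
Require Import Defs.
From HB Require Import structures.
From mathcomp Require Import all_boot all_order all_algebra.
From mathcomp Require Import complex.
From mathcomp Require Import boolp classical_sets fsbigop reals.
From mathcomp Require Import ring lra.
Set Implicit Arguments. Unset Strict Implicit.
Import GRing.Theory Num.Theory.
Local Open Scope ring_scope.

Definition W11s (R : realType) (x : R[i]) (i j k m : int) (u : R[i]) : R[i] :=
  if [&& `|i - j| == 1, `|j - m| == 1, `|m - k| == 1 & `|k - i| == 1] then
    if i != m then u + 1
    else if j == k then
      (if j == i + 1 then (- u + (x + i%:~R)) / (x + i%:~R)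
       else (u + (x + i%:~R)) / (x + i%:~R))
    else u * (x + j%:~R) / (x + i%:~R)
  else 0.

Lemma W11_shift (R : realType) (w : R[i]) (l i j k m : int) (u : R[i]) :
  W11 w (l + i) (l + j) (l + k) (l + m) u = W11s (l%:~R + w) i j k m u.
Proof.
have D : forall p q : int, (l + p) - (l + q) = p - q.
  by move=> p q; rewrite opprD addrACA subrr add0r.
rewrite /W11 /W11s !D.
have E : forall p q : int, (l + p == l + q) = (p == q) by move=> p q; apply: inj_eq; apply: addrI.
rewrite !E -addrA E !intrD.
by rewrite -!addrA !(addrC w).

Qed.

From mathcomp Require Import zify.
Local Open Scope classical_set_scope.

Lemma adjE (x y : int) : `|x - y| == 1 -> y = x - 1 \/ y = x + 1.
Proof. move=> /eqP H. lia. Qed.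

Lemma edgeC (x y : int) :
  y = x + 1 \/ y = x - 1 \/ ((`|x - y| == 1) = false /\ (`|y - x| == 1) = false).
Proof.
case E: (`|x - y| == 1); first by case/adjE: E; auto.
by right; right; rewrite distrC E.
Qed.

Lemma sum2 (R : realType) (F : int -> R[i]) (x : int) :
  (forall g, `|x - g| == 1 = false -> F g = 0) ->
  \sum_(g \in [set: int]) F g = F (x - 1) + F (x + 1).
Proof.
move=> HF; rewrite (fsbigE [:: x - 1; x + 1]) //=.
- by rewrite !big_cons big_nil !in_setT addr0.
- by rewrite inE; apply/eqP; lia.
- move=> g _; rewrite !inE => /norP [/eqP h1 /eqP h2]; apply: HF.
  apply/negbTE/eqP; lia.
Qed.

Section Z.
Variables (R : realType) (w : R[i]) (x y p q : int) (u : R[i]).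
Hypothesis H : (`|x - y| == 1) = false.
Lemma W0ab : W11 w x y p q u = 0. Proof. by rewrite /W11 H. Qed.
Lemma W0bc : W11 w p x q y u = 0. Proof. by rewrite /W11 H andbF. Qed.
Lemma W0cd : W11 w p q y x u = 0. Proof. by rewrite /W11 H !andbF. Qed.
Lemma W0da : W11 w y p x q u = 0. Proof. by rewrite /W11 H !andbF. Qed.
End Z.
Ltac zero H1 H2 := rewrite ?(W0ab _ _ _ _ H1) ?(W0bc _ _ _ _ H1) ?(W0cd _ _ _ _ H1) ?(W0da _ _ _ _ H1)
  ?(W0ab _ _ _ _ H2) ?(W0bc _ _ _ _ H2) ?(W0cd _ _ _ _ H2) ?(W0da _ _ _ _ H2) ?mulr0 ?mul0r ?mulr0 ?mul0r ?addr0.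

Theorem mainTheorem5 (R : realType) (w : R[i])
  (hw : forall n : int, w != n%:~R)
  (u v r : R[i]) (a b c d e f : int) :
  \sum_(g \in [set: int])
     (W11 w f g e d (v - r) * W11 w a b f g (u - r) * W11 w b c g d (u - v))
  = \sum_(g \in [set: int])
     (W11 w a g f e (u - v) * W11 w g c e d (u - r) * W11 w a b g c (v - r)).
Proof.
rewrite (@sum2 _ _ d); last first.
  by move=> g H; rewrite [W11 w b c g d _]/W11 H /= !andbF mulr0.
rewrite [RHS](@sum2 _ _ a); last first.
  by move=> g H; rewrite [W11 w a g f e _]/W11 H /= !mul0r.
case: (edgeC b a) => [->|[->|[H1 H2]]]; last by zero H1 H2.
all: case: (edgeC c b) => [->|[->|[H1 H2]]]; last by zero H1 H2.
all: case: (edgeC d c) => [->|[->|[H1 H2]]]; last by zero H1 H2.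
all: case: (edgeC e f) => [->|[->|[H1 H2]]]; last by zero H1 H2.
all: case: (edgeC d e) => [->|[->|[H1 H2]]]; last by zero H1 H2.
all: have [l ->] : exists l, d = l + 0 by exists d; rewrite addr0.
all: rewrite -!(addrA l).
all: rewrite !W11_shift.
all: rewrite /W11s.
all: simpl.

all: set x := l%:~R + w.

all: have hx : forall k : int, x + k%:~R != 0 by
  move=> k; apply: contra_neq (hw (- (l + k))) => H;
  rewrite intrN intrD; (have -> : w = x + k%:~R - l%:~R - k%:~R by rewrite /x; ring);
  rewrite H; ring.
all: clearbody x.
all: have h0 : x != 0 by have := hx 0; rewrite addr0.
all: have h1 : x + 1 != 0 by have := hx 1; rewrite mulr1z.
all: have hm1 : x - 1 != 0 by have := hx (-1); rewrite mulrN1z.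
all: by field; rewrite ?h0 ?h1 ?hm1.
Qed.
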